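(* Consider the private information delivery (PID) problem with $K$ messages, $N$ servers and $M$ messages stored per server, where $1\le M\le K$, $K/M\notin\mathbb{Z}$, and $$\lceil K/M \rceil < N < \frac{K}{\gcd(K,M)} - \left(\frac{M}{\gcd(K,M)}-1\right)\left(\lfloor K/M \rfloor - 1\right).$$ Then the capacity satisfies $$C \geq \frac{l}{N + (l-1)(\lfloor K/M \rfloor - 1)},\qquad\text{where } l = \left\lfloor \frac{(N - \lfloor K/M \rfloor + 1)M}{K - (\lfloor K/M \rfloor - 1) M} \right\rfloor.$$
   Context: The PID problem with parameters $(K,N,M)$: There are $K$ independent messages $W_1,\dots,W_K$, each consisting of $L$ i.i.d. uniform symbols from a finite field $\mathbb{F}_p$, so that (in $p$-ary units) $H(W_k)=L$ for all $k$ and $H(W_1,\dots,W_K)=\sum_k H(W_k)$. There are $N$ servers; server $n$ stores $S_n=\{W_k : k\in\mathcal{S}_n\}$ for some $\mathcal{S}_n\subset\{1,\dots,K\}$ with $|\mathcal{S}_n|=M$ (a design choice). The servers share a common random variable $Z$ independent of the messages. For each $k\in\{1,\dots,K\}$, server $n$ sends an answer $A_n^{[k]}$ that is a deterministic function of $(S_n,Z)$ and consists of $D_n$ symbols of $\mathbb{F}_p$ ($D_n$ independent of $k$). Correctness: $H(W_k\mid A_1^{[k]},\dots,A_N^{[k]})=0$ for all $k$. Privacy: for all $k$, $(A_1^{[1]},\dots,A_N^{[1]},W_1)$ and $(A_1^{[k]},\dots,A_N^{[k]},W_k)$ are identically distributed. The rate is $R=L/\sum_n D_n$; a rate is achievable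 if some scheme (choice of $L$, $p$, storage sets, $Z$, answer functions) satisfying these constraints has rate at least $R$; the capacity $C$ is the supremum of achievable rates over all storage designs and schemes. *)

(* Defs.v *)
From HB Require Import structures.
From mathcomp Require Import all_boot all_order all_algebra.
From mathcomp Require Import reals ereal classical_sets.
Set Implicit Arguments. Unset Strict Implicit. Unset Printing Implicit Defensive.
Import Order.TTheory GRing.Theory Num.Theory.
Local Open Scope ring_scope.

Definition msgs (K L p : nat) := {ffun 'I_K -> 'rV['F_p]_L}.

Definition prob (R : realType) (K L p : nat) (Zt : finType) (pZ : Zt -> R)
  (E : msgs K L p -> Zt -> bool) : R :=
  \sum_(w : msgs K L p) \sum_(z : Zt)
     (#|{: msgs K L p}|%:R)^-1 * pZ z * (E w z)%:R.

(* A PID scheme for parameters (K,N,M) with message length L over F_p,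
   storage sets S, common randomness Z on Zt with pmf pZ, answer lengths D,
   and answers A k n w z : 'rV_(D n) (answer of server n when W_k is desired). *)
Definition PID_scheme (R : realType) (K N M L p : nat) (Zt : finType)
  (pZ : Zt -> R) (S : 'I_N -> {set 'I_K}) (D : 'I_N -> nat)
  (A : forall (k : 'I_K) (n : 'I_N), msgs K L p -> Zt -> 'rV['F_p]_(D n)) : Prop :=
  prime p /\
      (forall n, #|S n| = M) /\
      ((forall z, 0 <= pZ z) /\ \sum_(z : Zt) pZ z = 1) /\
      (forall k n (w w' : msgs K L p) z,
          (forall i, i \in S n -> w i = w' i) -> A k n w z = A k n w' z) /\
      (* correctness: H(W_k | A_1^[k],...,A_N^[k]) = 0, i.e. on the support,
         the answers determine W_k *)
      (forall k (w w' : msgs K L p) z z', 0 < pZ z -> 0 < pZ z' ->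
          (forall n, A k n w z = A k n w' z') -> w k = w' k) /\
      (forall (k k' : 'I_K) (a : forall n : 'I_N, 'rV['F_p]_(D n))
              (x : 'rV['F_p]_L),
          prob pZ (fun w z => [forall n, A k n w z == a n] && (w k == x))
        = prob pZ (fun w z => [forall n, A k' n w z == a n] && (w k' == x))).

Definition achievable (R : realType) (K N M : nat) (r : R) : Prop :=
  exists (L p : nat) (Zt : finType) (pZ : Zt -> R) (S : 'I_N -> {set 'I_K})
         (D : 'I_N -> nat)
         (A : forall (k : 'I_K) (n : 'I_N), msgs K L p -> Zt -> 'rV['F_p]_(D n)),
    @PID_scheme R K N M L p Zt pZ S D A /\ r <= L%:R / (\sum_(n < N) D n)%:R.

Definition capacity (R : realType) (K N M : nat) : \bar R :=
  ereal_sup [set (r%:E) | r in [set r : R | achievable K N M r]].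

(* Main.v *)
Require Import Defs.
From HB Require Import structures.
From mathcomp Require Import all_boot all_order all_algebra.
From mathcomp Require Import reals ereal classical_sets.
From mathcomp Require Import fingroup perm ring zify.
Set Implicit Arguments. Unset Strict Implicit. Unset Printing Implicit Defensive.
Import Order.TTheory GRing.Theory Num.Theory.
Local Open Scope ring_scope.

Definition msgsF (F : finFieldType) (K L : nat) := {ffun 'I_K -> 'rV[F]_L}.
Definition probF (R : realType) (F : finFieldType) (K L : nat) (Zt : finType) (pZ : Zt -> R)
  (E : msgsF F K L -> Zt -> bool) : R :=
  \sum_(w : msgsF F K L) \sum_(z : Zt)
     (#|{: msgsF F K L}|%:R)^-1 * pZ z * (E w z)%:R.
Definition PID_gen (R : realType) (F : finFieldType) (K N M L : nat) (Zt : finType)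
  (pZ : Zt -> R) (S : 'I_N -> {set 'I_K}) (D : 'I_N -> nat)
  (A : forall (k : 'I_K) (n : 'I_N), msgsF F K L -> Zt -> 'rV[F]_(D n)) : Prop :=
      (forall n, #|S n| = M) /\
      ((forall z, 0 <= pZ z) /\ \sum_(z : Zt) pZ z = 1) /\
      (forall k n (w w' : msgsF F K L) z,
          (forall i, i \in S n -> w i = w' i) -> A k n w z = A k n w' z) /\
      (forall k (w w' : msgsF F K L) z z', 0 < pZ z -> 0 < pZ z' ->
          (forall n, A k n w z = A k n w' z') -> w k = w' k) /\
      (forall (k k' : 'I_K) (a : forall n : 'I_N, 'rV[F]_(D n))
              (x : 'rV[F]_L),
          probF pZ (fun w z => [forall n, A k n w z == a n] && (w k == x))
        = probF pZ (fun w z => [forall n, A k' n w z == a n] && (w k' == x))).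

Section Abs.
Variables (R : realType) (F : finFieldType) (K N M l : nat) (D : 'I_N -> nat) (S : 'I_N -> {set 'I_K})
  (Phi : 'I_N * 'I_l.+1 -> 'rV[F]_l) (pos : 'I_K -> 'I_l -> 'I_N * 'I_l.+1) (k0 : 'I_K).

Definition Ix := ('I_N * 'I_l.+1)%type.
Definition Zt := {ffun Ix -> F}.
Definition pZ : Zt -> R := fun _ => (#|{: Zt}|%:R)^-1.
Definition phi (a : Zt) : 'rV[F]_l := \sum_i a i *: Phi i.
Definition Vm k : 'M[F]_l := \matrix_(u, v) Phi (pos k u) 0 v.
Definition gf k (x : 'rV[F]_l) : Zt :=
  [ffun i => \sum_(u < l) (i == pos k u)%:R * (x *m invmx (Vm k)) 0 u].
Definition av k (w : msgsF F K l) (z : Zt) : Zt := gf k (w k) + z - gf k0 (phi z).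
Definition Aa k (n : 'I_N) (w : msgsF F K l) (z : Zt) : 'rV[F]_(D n) :=
  \row_(j < D n) av k w z (n, inord j).

Lemma phiD a b : phi (a + b) = phi a + phi b.
Proof. by rewrite /phi -big_split; apply: eq_bigr => i _; rewrite ffunE scalerDl. Qed.
Lemma phiB a b : phi (a - b) = phi a - phi b.
Proof. by rewrite /phi -sumrB; apply: eq_bigr => i _; rewrite !ffunE scalerBl. Qed.

Hypothesis Hunit : forall k, Vm k \in unitmx.
Hypothesis Hstore : forall k u, k \in S (pos k u).1.
Hypothesis Hvalid : forall i, Phi i != 0 -> (i.2 < D i.1)%N.
Hypothesis Hcard : forall n, #|S n| = M.

Lemma phig k x : phi (gf k x) = x.
Proof.
rewrite /phi.
transitivity (\sum_(u < l) (x *m invmx (Vm k)) 0 u *: Phi (pos k u)).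
  set c := x *m invmx (Vm k).
  transitivity (\sum_(i : Ix) \sum_(u < l) ((i == pos k u)%:R * c 0 u) *: Phi i).
    by apply: eq_bigr => i _; rewrite ffunE scaler_suml.
  rewrite exchange_big /=; refine (eq_bigr _ _) => u _.
  rewrite (bigD1 (pos k u)) //= eqxx mul1r big1 ?addr0 // => i /negbTE ->.
  by rewrite mul0r scale0r.
have -> : \sum_(u < l) (x *m invmx (Vm k)) 0 u *: Phi (pos k u) = x *m invmx (Vm k) *m Vm k.
  rewrite [RHS]mulmx_sum_row; apply: eq_bigr => u _; congr (_ *: _).
  by apply/rowP => v; rewrite !mxE.
by rewrite mulmxKV.
Qed.

Lemma av_phi k w z : phi (av k w z) = w k.
Proof. by rewrite /av phiB phiD !phig addrK. Qed.

Definition sw (k k' : 'I_K) (w : msgsF F K l) : msgsF F K l := [ffun i => w (tperm k k' i)].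

Lemma sw_inj k k' : injective (sw k k').
Proof.
move=> w1 w2 e; apply/ffunP => i.
have := congr1 (fun f : msgsF F K l => f (tperm k k' i)) e.
by rewrite /sw !ffunE tpermK.
Qed.

Lemma priv_pt k k' (w : msgsF F K l) (z : Zt) n :
  Aa k' n (sw k k' w) (z + (gf k (w k) - gf k' (w k))) = Aa k n w z.
Proof.
have E : av k' (sw k k' w) (z + (gf k (w k) - gf k' (w k))) = av k w z.
  rewrite /av phiD phiB !phig subrr addr0 /sw ffunE tpermR.
  congr (_ - _); rewrite addrCA [gf k' _ + _]addrC subrK addrC //.
by rewrite /Aa E.
Qed.


Lemma scheme_ok : @PID_gen R F K N M l Zt pZ S D Aa.
Proof.
split; first exact: Hcard.
split.
  split; first by move=> z; rewrite /pZ invr_ge0 ler0n.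
  have cz : (0 < #|{: Zt}|)%N by apply/card_gt0P; exists 0.
  rewrite /pZ sumr_const -(mulr_natl ((#|{: Zt}|%:R)^-1)) mulfV // pnatr_eq0 -lt0n.
  exact: cz.

split.
  move=> k n w w' z Hw; apply/rowP => j; rewrite !mxE !ffunE.
  case: (boolP (k \in S n)) => kS; first by rewrite Hw.
  have g0 : forall y : 'rV[F]_l, \sum_(u < l) ((n, inord j) == pos k u)%:R * (y *m invmx (Vm k)) 0 u = 0.
    move=> y; apply: big1 => u _.
    case: eqP => [e|]; last by rewrite mul0r.
    by move: kS; rewrite -[n]/((n, inord j : 'I_l.+1).1) e Hstore.
  by rewrite !g0.
split.
  move=> k w w' z z' _ _ H.
  rewrite -(av_phi k w z) -(av_phi k w' z') /phi; apply: eq_bigr => i _.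
  case: (eqVneq (Phi i) 0) => [->|nz]; first by rewrite !scaler0.
  have := Hvalid nz; case: i nz => n j nz hj0.
  have hj : (j < D n)%N := hj0.
  have := congr1 (fun r : 'rV[F]_(D n) => r 0 (Ordinal hj)) (H n).
  rewrite !mxE.
  have -> : inord (Ordinal hj) = j :> 'I_l.+1 by apply: val_inj; exact: (inordK (ltn_ord j)).
  by move=> ->.
move=> k k' a x; rewrite /probF.
pose E := fun (k : 'I_K) (w : msgsF F K l) (z : Zt) => [forall n, Aa k n w z == a n] && (w k == x).
pose d := fun w : msgsF F K l => gf k (w k) - gf k' (w k).
pose c := (#|{: msgsF F K l}|%:R : R)^-1.
have pt : forall w z, E k w z = E k' (sw k k' w) (z + d w).
  move=> w z; rewrite /E {2}/sw ffunE tpermR.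
  congr (_ && _); apply: eq_forallb => n.
  by rewrite priv_pt.
transitivity (\sum_(w : msgsF F K l) \sum_(z : Zt) c * pZ z * (E k w z)%:R).
  by [].
transitivity (\sum_(w : msgsF F K l) \sum_(z : Zt) c * pZ z * (E k' w z)%:R); last by [].
transitivity (\sum_(w : msgsF F K l) \sum_(z : Zt) c * pZ z * (E k' (sw k k' w) (z + d w))%:R).
  by apply: eq_bigr => w _; apply: eq_bigr => z _; rewrite pt.
transitivity (\sum_(w : msgsF F K l) \sum_(z : Zt) c * pZ z * (E k' (sw k k' w) z)%:R).
  apply: eq_bigr => w _.
  by rewrite [RHS](reindex_inj (addIr (d w))).
by rewrite [RHS](reindex_inj (@sw_inj k k')).
Qed.

End Abs.


Lemma sum_if (N Q a b : nat) :
  (\sum_(n < N) (if (n < Q)%N then a else b) = minn Q N * a + (N - Q) * b)%N.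
Proof.
elim: N => [|N IH]; first by rewrite big_ord0 minn0.
rewrite big_ord_recr /= IH.

case: (ltnP N Q) => h.
  have e1 : minn Q (N.+1) = N.+1 by lia.
  have e2 : minn Q N = N by lia.
  have e3 : (N - Q = 0)%N by lia.
  have e4 : (N.+1 - Q = 0)%N by lia.
  rewrite e1 e3 e4.
  by rewrite !mul0n !addn0 mulSn addnC.
have e1 : minn Q (N.+1) = Q by lia.
have e2 : minn Q N = Q by lia.
have e3 : (N.+1 - Q = (N - Q).+1)%N by lia.
rewrite e1 e3.
by rewrite mulSnr addnA.
Qed.

Section Conc.
Variables (F : finFieldType) (K N M : nat) (k0 : 'I_K) (n0 : 'I_N).
Let Q := (K %/ M).-1.
Let K' := (K - Q * M)%N.
Let N' := (N - Q)%N.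
Definition lc := (N' * M %/ K')%N.
Hypothesis M0 : (0 < M)%N.
Hypothesis MK : (M <= K)%N.
Hypothesis QN : (Q < N)%N.
Hypothesis Hinj : forall i j : nat, (i < N')%N -> (j < N')%N -> (i%:R : F) = j%:R -> i = j.

Lemma q_pos : (0 < K %/ M)%N.
Proof. by rewrite divn_gt0. Qed.

Lemma QMK : (Q * M + M <= K)%N.
Proof.
have h := leq_divM K M.
have e : (K %/ M = Q.+1)%N by rewrite /Q prednK // q_pos.
by rewrite e mulSnr in h; lia.
Qed.

Lemma MK' : (M <= K')%N.
Proof. have := QMK; rewrite /K'; lia. Qed.

Definition ordN (n : nat) : 'I_N := insubd n0 n.
Lemma ordNE n : (n < N)%N -> ordN n = n :> nat.
Proof. by move=> h; rewrite /ordN val_insubd h. Qed.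
Definition ordK (k : nat) : 'I_K := insubd k0 k.
Lemma ordKE k : (k < K)%N -> ordK k = k :> nat.
Proof. by move=> h; rewrite /ordK val_insubd h. Qed.

Definition fnat (n t : nat) : nat :=
  if (n < Q)%N then (n * M + t)%N else (Q * M + ((n - Q) * M + t) %% K')%N.

Lemma fnat_lt (n : 'I_N) (t : 'I_M) : (fnat n t < K)%N.
Proof.
have h1 := QMK; have h2 := ltn_ord t.
rewrite /fnat; case: ifP => h.
  have : (n * M + M <= Q * M)%N by rewrite -mulSnr leq_mul2r h orbT.
  lia.
have : (((n - Q) * M + t) %% K' < K')%N by rewrite ltn_mod; have := MK'; lia.
rewrite /K'; lia.
Qed.

Lemma fnat_inj (n : 'I_N) (t t' : 'I_M) : fnat n t = fnat n t' -> t = t'.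
Proof.
move=> e; apply: val_inj => /=; move: e; rewrite /fnat; case: ifP => _.
  by move/addnI.
move/addnI => /eqP; rewrite eqn_modDl => /eqP.
have := MK'; have := ltn_ord t; have := ltn_ord t' => a b c.
by rewrite !modn_small //; lia.
Qed.

Definition fK (n : 'I_N) (t : 'I_M) : 'I_K := ordK (fnat n t).

Definition Sc (n : 'I_N) : {set 'I_K} := [set fK n t | t in 'I_M].

Lemma Sc_card n : #|Sc n| = M.
Proof.
rewrite card_imset ?card_ord // => t t' e.
apply: (fnat_inj (n := n)).
by have := congr1 (@nat_of_ord K) e; rewrite /fK !ordKE ?fnat_lt.
Qed.

Definition Dc (n : 'I_N) : nat := if (n < Q)%N then lc else 1%N.

Definition Phic (i : 'I_N * 'I_lc.+1) : 'rV[F]_lc :=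
  if (i.1 < Q)%N then \row_v ((v : nat) == i.2)%:R
  else if (i.2 == 0 :> nat) then \row_v (((i.1 - Q)%N)%:R ^+ v) else 0.

Lemma Phic_valid i : Phic i != 0 -> (i.2 < Dc i.1)%N.
Proof.
rewrite /Phic /Dc; case: ifP => h.
  apply: contraNT; rewrite -leqNgt => hl.
  apply/eqP/rowP => v; rewrite !mxE.
  have : (v : nat) != i.2 by have := ltn_ord v; lia.
  by move/negbTE ->.
by case: ifP => [/eqP -> | _]; rewrite ?eqxx.
Qed.


Definition sc (k u : nat) : nat := (k - Q * M + u * K')%N.

Definition posc (k : 'I_K) (u : 'I_lc) : 'I_N * 'I_lc.+1 :=
  if (k < Q * M)%N then (ordN (k %/ M), inord u)
  else (ordN (Q + sc k u %/ M), ord0).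

Lemma s_bound (k : 'I_K) (u : 'I_lc) : ~~ (k < Q * M)%N -> (sc k u %/ M < N')%N.
Proof.
move=> h; rewrite ltn_divLR //.
have h1 : (u * K' + K' <= lc * K')%N by rewrite -mulSnr leq_mul2r ltn_ord orbT.
have h2 : (lc * K' <= N' * M)%N by apply: leq_divM.
have h3 := ltn_ord k.
rewrite /sc /K'; rewrite /K' in h1; lia.
Qed.

Lemma Hstore_c k u : k \in Sc (posc k u).1.
Proof.
rewrite /posc; case: ifP => h /=.
  have hq : (k %/ M < Q)%N by rewrite ltn_divLR.
  apply/imsetP; exists (Ordinal (ltn_pmod k M0)) => //.
  apply: val_inj => /=; rewrite /fK ordKE ?fnat_lt // /fnat ordNE; last by lia.
  by rewrite hq /= -divn_eq.
have hs := s_bound u (negbT h).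
have hn : (Q + sc k u %/ M < N)%N by rewrite /N' in hs; lia.
apply/imsetP; exists (Ordinal (ltn_pmod (sc k u) M0)) => //.
apply: val_inj => /=; rewrite /fK ordKE ?fnat_lt // /fnat ordNE //.
have -> : (Q + sc k u %/ M < Q)%N = false by rewrite ltnNge leq_addr.
rewrite addKn /= -divn_eq /sc [(k - Q * M + _)%N]addnC modnMDl modn_small.
  have := negbT h; rewrite -leqNgt; lia.
have := ltn_ord k; rewrite /K'; lia.
Qed.

Lemma Hunit_c k : Vm Phic posc k \in unitmx.
Proof.
case: (boolP (k < Q * M)%N) => h.
  have hq : (k %/ M < Q)%N by rewrite ltn_divLR.
  have -> : Vm Phic posc k = 1%:M.
    apply/matrixP => u v; rewrite !mxE /Phic /posc h /= ordNE; last by lia.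
    rewrite hq mxE inordK; last by apply: ltnW; apply: ltn_ord.
    by rewrite eq_sym.
  exact: unitmx1.
pose a : 'rV[F]_lc := \row_u ((sc k u %/ M)%:R).
have -> : Vm Phic posc k = (Vandermonde lc a)^T.
  apply/matrixP => u v; rewrite !mxE /Phic /posc (negbTE h) /=.
  have hs := s_bound u h.
  rewrite ordNE; last by rewrite /N' in hs; lia.
  have -> : (Q + sc k u %/ M < Q)%N = false by rewrite ltnNge leq_addr.
  by rewrite addKn mxE.
rewrite unitmx_tr unitmxE det_Vandermonde unitfE.
apply/prodf_neq0 => i _; apply/prodf_neq0 => j ij; rewrite !mxE subr_eq0.
apply/eqP => e.
have := Hinj (s_bound j h) (s_bound i h) e.
have : (sc k i %/ M < sc k j %/ M)%N.
  have h1 : (i * K' + K' <= j * K')%N by rewrite -mulSnr leq_mul2r ij orbT.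
  have h2 := MK'.
  have : ((sc k i + M) %/ M <= sc k j %/ M)%N by apply: leq_div2r; rewrite /sc; lia.
  by rewrite divnDr ?dvdnn // divnn M0 addn1.
lia.
Qed.

End Conc.


Lemma gen_to_scheme (R : realType) K N M L p (Zt : finType) (pZ : Zt -> R) S D
  (A : forall (k : 'I_K) (n : 'I_N), msgs K L p -> Zt -> 'rV['F_p]_(D n)) :
  prime p -> @PID_gen R 'F_p K N M L Zt pZ S D A -> @PID_scheme R K N M L p Zt pZ S D A.
Proof. by move=> Hp H; split. Qed.

Lemma floor_div (R : realType) (a b : nat) : (0 < b)%N ->
  Num.floor (a%:R / b%:R : R) = (a %/ b)%:Z.
Proof.
move=> b0; have b0' : (0 : R) < b%:R by rewrite ltr0n.
apply: floor_def; apply/andP; split.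
  by rewrite ler_pdivlMr // -natrM ler_nat leq_divM.
have -> : (((a %/ b)%:Z + 1)%:~R : R) = ((a %/ b).+1)%:R by rewrite intrD -addn1 natrD.
rewrite ltr_pdivrMr // -natrM ltr_nat.
exact: ltn_ceil.
Qed.

Lemma Fp_inj p (N : nat) : prime p -> (N < p)%N ->
  forall i j : nat, (i < N)%N -> (j < N)%N -> (i%:R : 'F_p) = j%:R -> i = j.
Proof.
move=> pp Np i j hi hj e.
have := congr1 (@nat_of_ord _) e; rewrite !val_Fp_nat // !modn_small //; lia.
Qed.

Unset Implicit Arguments.

Theorem theorem3 (R : realType) (K N M : nat) :
  (1 <= M <= K)%N ->
  ~~ (M %| K)%N ->
  let KM : R := K%:R / M%:R in
  let g : R := (gcdn K M)%:R in
  let q : R := (Num.floor KM)%:~R in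
  ((Num.ceil KM)%:~R : R) < N%:R ->
  N%:R < K%:R / g - (M%:R / g - 1) * (q - 1) ->
  let l : R := (Num.floor ((N%:R - q + 1) * M%:R / (K%:R - (q - 1) * M%:R)))%:~R in
  ((l / (N%:R + (l - 1) * (q - 1)))%:E <= capacity R K N M)%E.
Proof.
move=> /andP[M0 MK] nd KM g q hceil hN; cbv zeta.
set l := ((Num.floor _)%:~R : R).
have fq : Num.floor KM = (K %/ M)%:Z by apply: floor_div.
have qpos : (0 < K %/ M)%N by rewrite divn_gt0.
set Q := (K %/ M).-1.
have qE : (K %/ M = Q.+1)%N by rewrite /Q prednK.
have qR : q = Q%:R + 1.
  rewrite /q fq qE; change ((Q.+1)%:R = Q%:R + 1 :> R).
  by rewrite -addn1 natrD.
have QN : (Q < N)%N.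
  have h1 : q <= KM by rewrite /q floor_le.
  have h2 := ceil_ge KM.
  have : q < N%:R by apply: (le_lt_trans h1); apply: (le_lt_trans h2).
  by rewrite qR -(natrD _ Q 1) ltr_nat addn1 => /ltnW.
have QMK : (Q * M + M <= K)%N.
  by have := leq_divM K M; rewrite qE mulSnr.
have K'0 : (0 < K - Q * M)%N by lia.
have lE : l = (lc K N M)%:R.
  rewrite /l qR /lc.
  have -> : N%:R - (Q%:R + 1) + 1 = ((N - Q)%N)%:R :> R by rewrite natrB ?(ltnW QN) //; ring.
  have -> : K%:R - (Q%:R + 1 - 1) * M%:R = ((K - Q * M)%N)%:R :> R.
    by rewrite natrB ?natrM; [ring | lia].
  by rewrite -natrM floor_div.
have K0 : (0 < K)%N by lia.
have N0 : (0 < N)%N by lia.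
pose k0 : 'I_K := Ordinal K0.
pose n0 : 'I_N := Ordinal N0.
have [p Np pp] := prime_above N.
set r := l / _.
have Hach : achievable K N M r.
  exists (lc K N M), p, (Zt 'F_p N (lc K N M)), (pZ R (F:='F_p) (N:=N) (l:=lc K N M)),
    (Sc M k0), (Dc K M),
    (Aa (Dc K M) (Phic 'F_p (K:=K) (M:=M)) (posc (M:=M) n0) k0).
  split.
    apply: (gen_to_scheme pp).
    apply: scheme_ok.
    - apply: Hunit_c => //.
      move=> i j hi hj; apply: (Fp_inj pp (N := N - Q)) => //; lia.
    - exact: Hstore_c.
    - by move=> i; apply: Phic_valid.
    - exact: Sc_card.
  have -> : (\sum_(n < N) Dc K M n = Q * lc K N M + (N - Q))%N.
    rewrite /Dc sum_if muln1; congr (_ * _ + _)%N; lia.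
  rewrite /r lE qR natrD natrM natrB ?(ltnW QN) //.
  rewrite le_eqVlt; apply/orP; left; apply/eqP; congr (_ / _); ring.
rewrite /capacity; apply: ereal_sup_ubound.
by exists r.
Qed.
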